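(* Let $\mathbb{S}$ be a metric space with its Borel $\sigma$-field, let $\{\mu_n\}_{n=1,2,\ldots}$ be a sequence of measures on $\mathbb{S}$ converging weakly to a finite measure $\mu$ on $\mathbb{S}$, and let $\{f_n,g_n\}_{n=1,2,\ldots}$ be measurable $[-\infty,+\infty]$-valued functions on $\mathbb{S}$ such that $f_n(s)\ge g_n(s)$ for all $n$ and $s\in\mathbb{S}$, and $$-\infty<\int_{\mathbb{S}}\limsup_{n\to\infty,\,s'\to s} g_n(s')\,\mu(ds)\le\liminf_{n\to\infty}\int_{\mathbb{S}} g_n(s)\,\mu_n(ds).$$ Then $$\int_{\mathbb{S}}\liminf_{n\to\infty,\,s'\to s} f_n(s')\,\mu(ds)\le\liminf_{n\to\infty}\int_{\mathbb{S}} f_n(s)\,\mu_n(ds).$$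
   Context: Weak convergence: $\int f\,d\mu_n\to\int f\,d\mu$ for all bounded continuous $f$. Integrals of extended-real functions are $\int f^+-\int f^-$, defined when one of these is finite; all integrals in the hypotheses are assumed defined. $\liminf_{n\to\infty,s'\to s}f_n(s'):=\sup_{n\ge1,\delta>0}\inf_{m\ge n,\,s'\in B_\delta(s)}f_m(s')$ and $\limsup_{n\to\infty,s'\to s}g_n(s'):=\inf_{n\ge1,\delta>0}\sup_{m\ge n,\,s'\in B_\delta(s)}g_m(s')$, with $B_\delta(s)$ the ball of radius $\delta$ about $s$. *)

(* Defs.v *)
From HB Require Import structures.
From mathcomp Require Import all_boot all_order all_algebra.
From mathcomp Require Import all_classical all_reals all_analysis measurable_realfun.
Set Implicit Arguments. Unset Strict Implicit. Unset Printing Implicit Defensive.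
Import Order.TTheory GRing.Theory Num.Theory.
Import numFieldTopology.Exports numFieldNormedType.Exports.
Local Open Scope classical_set_scope.
Local Open Scope ring_scope.

(* Nonempty metric spaces (measurable types in MathComp-Analysis are
   always pointed, i.e. nonempty). *)
#[short(type="pmetricType")]
HB.structure Definition PointedMetric (K : numDomainType) :=
  { M of Metric K M & isPointed M }.

Notation borel_of S := (g_sigma_algebraType (@open S)).

Local Open Scope ereal_scope.

Definition joint_liminf (R : realType) (S : pmetricType R)
    (f : nat -> S -> \bar R) (s : S) : \bar R :=
  ereal_sup [set x | exists (n : nat) (delta : R), (0 < delta)%R /\
     x = ereal_inf [set y | exists (m : nat) (s' : S),
                              [/\ (n <= m)%N, ball s delta s' & y = f m s']]].

Definition joint_limsup (R : realType) (S : pmetricType R)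
    (g : nat -> S -> \bar R) (s : S) : \bar R :=
  ereal_inf [set x | exists (n : nat) (delta : R), (0 < delta)%R /\
     x = ereal_sup [set y | exists (m : nat) (s' : S),
                              [/\ (n <= m)%N, ball s delta s' & y = g m s']]].

Definition integral_defined (R : realType) (S : pmetricType R)
    (mu : {measure set (borel_of S) -> \bar R}) (f : S -> \bar R) : Prop :=
  (\int[mu]_x (f ^\+) x < +oo) \/ (\int[mu]_x (f ^\-) x < +oo).

Definition weakly_converges (R : realType) (S : pmetricType R)
    (mu_ : nat -> {measure set (borel_of S) -> \bar R})
    (mu : {measure set (borel_of S) -> \bar R}) : Prop :=
  forall f : S -> R, continuous f -> (exists M : R, forall x, (`|f x| <= M)%R) ->
    (fun n => \int[mu_ n]_x (f x)%:E) @ \oo --> \int[mu]_x (f x)%:E.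

(* "All integrals in the hypotheses are assumed defined": the integrals of
   bounded continuous functions appearing in the weak-convergence hypothesis. *)
Definition weak_conv_integrals_defined (R : realType) (S : pmetricType R)
    (mu_ : nat -> {measure set (borel_of S) -> \bar R}) : Prop :=
  forall f : S -> R, continuous f -> (exists M : R, forall x, (`|f x| <= M)%R) ->
    forall n, integral_defined (mu_ n) (fun x => (f x)%:E).

(* Main.v *)
Require Import Defs.
From HB Require Import structures.
From mathcomp Require Import all_boot all_order all_algebra.
From mathcomp Require Import all_classical all_reals all_analysis measurable_realfun.
Import Order.TTheory GRing.Theory Num.Theory.
Import numFieldTopology.Exports numFieldNormedType.Exports.
Local Open Scope classical_set_scope.
Local Open Scope ring_scope.
Local Open Scope ereal_scope.
From mathcomp Require Import lra.

Section ER.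
Variable R : realType.
Implicit Types (x y : \bar R) (u v : (\bar R)^nat).

Lemma ltr_between x y : y < x -> exists a : R, y < a%:E /\ a%:E < x.
Proof.
case: x => [r| |]; case: y => [s| |] //= H.
- move: H; rewrite lte_fin => sr; exists ((s + r) / 2)%R; rewrite !lte_fin.
  by split; [exact: (midf_lt sr).1|exact: (midf_lt sr).2].
- exists (r - 1)%R; split; first exact: ltNyr.
  by rewrite lte_fin ltrBlDr ltrDl ltr01.
- exists (s + 1)%R; split; last exact: ltry.
  by rewrite lte_fin ltrDl ltr01.
- by exists 0%R; split; [exact: ltNyr|exact: ltry].
Qed.

Lemma le_by_reals x y : (forall a : R, a%:E < x -> a%:E <= y) -> x <= y.
Proof.
move=> H; rewrite leNgt; apply/negP => /ltr_between [a [ya ax]].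
by have := H a ax; rewrite leNgt ya.
Qed.

Lemma liminfE u : limn_einf u = ereal_sup (range (einfs u)).
Proof. by rewrite limn_einf_lim; apply/cvg_lim => //; exact: cvg_einfs_sup. Qed.

Lemma einfs_lb u n m : (n <= m)%N -> einfs u n <= u m.
Proof. by move=> nm; apply: ereal_inf_lbound; exists m. Qed.

Lemma liminf_le_ev u v N : (forall n, (N <= n)%N -> u n <= v n) ->
  limn_einf u <= limn_einf v.
Proof.
move=> uv; rewrite !liminfE; apply: ge_ereal_sup => _ [n _ <-].
apply: (@le_trans _ _ (einfs u (maxn n N))).
  by apply: nondecreasing_einfs; exact: leq_maxl.
apply: (@le_trans _ _ (einfs v (maxn n N))); last first.
  by apply: ereal_sup_ubound; exists (maxn n N).
apply: le_ereal_inf_tmp => _ [m /= nm <-].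
apply: (@le_trans _ _ (u m)); first by apply: einfs_lb.
apply: uv; exact: leq_trans (leq_maxr _ _) nm.
Qed.

Lemma liminf_ub u L : (forall n, u n <= L) -> limn_einf u <= L.
Proof.
move=> uL; rewrite liminfE; apply: ge_ereal_sup => _ [n _ <-].
exact: (le_trans (@einfs_lb u n n (leqnn n)) (uL n)).
Qed.

Lemma liminf_lb_ev u a N : (forall n, (N <= n)%N -> a <= u n) ->
  a <= limn_einf u.
Proof.
move=> au; rewrite liminfE; apply: (@le_trans _ _ (einfs u N)).
  by apply: le_ereal_inf_tmp => _ [m /= nm <-]; exact: au.
by apply: ereal_sup_ubound; exists N.
Qed.

Lemma liminf_cvg u l : u @ \oo --> l -> limn_einf u = l.
Proof. by move=> ul; have [-> _] := cvg_limn_einf_sup ul. Qed.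

Lemma liminfD u v : limn_einf u + limn_einf v <= limn_einf (u \+ v).
Proof.
have [->|uNy] := eqVneq (limn_einf u) -oo; first by rewrite leNye.
have [->|vNy] := eqVneq (limn_einf v) -oo; first by rewrite addeNy leNye.
rewrite !limn_einf_lim in uNy vNy *.
have cu : cvgn (einfs u) by exact: is_cvg_einfs.
have cv : cvgn (einfs v) by exact: is_cvg_einfs.
have D : (limn (einfs u) +? limn (einfs v)).
  by rewrite /adde_def (negbTE uNy) (negbTE vNy) !andbF.
rewrite -limeD //.
apply: lee_lim; first exact: is_cvgeD.
  exact: is_cvg_einfs.
near=> n; apply: le_ereal_inf_tmp => _ [m /= nm <-].
by apply: leeD; apply: einfs_lb.
Unshelve. all: by end_near. Qed.
End ER.

Section PT. Variable R : realType.
Lemma EFmax (x y : R) : maxe x%:E y%:E = (Num.max x y)%:E.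
Proof. by rewrite /Order.max/= lte_fin; case: ifP. Qed.

Lemma ptid (a b : \bar R) : 0 <= a ->
  maxe (a + b) 0 + maxe (- b) 0 = a + maxe b 0 + maxe (- (a + b)) 0.
Proof.
case: a => [r| |] // r0; case: b => [s| |].
- rewrite -EFinD -!EFinN !EFmax -!EFinD; congr EFin.
  rewrite lee_fin in r0.
  rewrite /Order.max.
  repeat case: ifPn; rewrite ?ltNge ?negbK; move=> *; lra.
all: rewrite /adde/= ?maxye ?maxey ?maxeNy ?maxNye /=.
all: rewrite ?adde0 ?add0e ?addey ?addye //.
all: by rewrite EFmax.
Qed.
End PT.

Section INT.
Context d (T : measurableType d) (R : realType) (nu : {measure set T -> \bar R}).
Implicit Types f g h : T -> \bar R.

Lemma ae_le_int f1 f2 : measurable_fun setT f1 -> measurable_fun setT f2 ->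
  {ae nu, forall x, f1 x <= f2 x} -> \int[nu]_x f1 x <= \int[nu]_x f2 x.
Proof.
move=> m1 m2 ae12; rewrite [leLHS]integralE [leRHS]integralE; apply: leeB.
- apply: ae_ge0_le_integral => //.
  + exact: measurable_funepos.
  + exact: measurable_funepos.
  + apply: filterS ae12 => x le12 _.
    by rewrite !funeposE; apply: le_max2; rewrite ?lexx.
- apply: ae_ge0_le_integral => //.
  + exact: measurable_funeneg.
  + exact: measurable_funeneg.
  + apply: filterS ae12 => x le12 _.
    by rewrite !funenegE; apply: le_max2; rewrite ?lexx ?leeN2.
Qed.

Lemma le_int f1 f2 : measurable_fun setT f1 -> measurable_fun setT f2 ->
  (forall x, f1 x <= f2 x) -> \int[nu]_x f1 x <= \int[nu]_x f2 x.
Proof. by move=> m1 m2 le12; apply: ae_le_int => //; apply: aeW. Qed.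

Lemma L1eq h g : measurable_fun setT h -> measurable_fun setT g ->
  (forall x, 0 <= h x) -> \int[nu]_x g^\- x < +oo ->
  \int[nu]_x (h x + g x) = \int[nu]_x h x + \int[nu]_x g x.
Proof.
move=> mh mg h0 gfin.
have mhg : measurable_fun setT (h \+ g) by exact: emeasurable_funD.
have mp := measurable_funepos mhg; have mn := measurable_funeneg mhg.
have mgp := measurable_funepos mg; have mgn := measurable_funeneg mg.
have id : \int[nu]_x ((h \+ g)^\+ x + g^\- x) =
          \int[nu]_x ((h x + g^\+ x) + (h \+ g)^\- x).
  by apply: eq_integral => x _; rewrite !funeposE !funenegE; exact: ptid.
have E1 : \int[nu]_x ((h \+ g)^\+ x + g^\- x) =
    \int[nu]_x (h \+ g)^\+ x + \int[nu]_x g^\- x by rewrite ge0_integralD.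
have E2 : \int[nu]_x ((h x + g^\+ x) + (h \+ g)^\- x) =
    \int[nu]_x (h x + g^\+ x) + \int[nu]_x (h \+ g)^\- x.
  rewrite ge0_integralD //; first by move=> x _; rewrite adde_ge0.
  exact: emeasurable_funD.
have E3 : \int[nu]_x (h x + g^\+ x) = \int[nu]_x h x + \int[nu]_x g^\+ x.
  by rewrite ge0_integralD.
rewrite E1 E2 E3 in id.
have afin : \int[nu]_x g^\- x \is a fin_num.
  by rewrite ge0_fin_numE // integral_ge0.
have bfin : \int[nu]_x (h \+ g)^\- x \is a fin_num.
  rewrite ge0_fin_numE ?integral_ge0 //; apply: le_lt_trans gfin.
  apply: ge0_le_integral => // x _.
  rewrite !funenegE; apply: le_max2; rewrite ?lexx // leeN2 /=.
  exact: leeDr.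
rewrite [LHS]integralE (integralE nu _ g).
rewrite -[X in X - _](addeK _ afin) id.
rewrite (addeAC _ (\int[nu]_x _)) addeK // addeA.
by [].
Qed.

Lemma L1le h g : measurable_fun setT h -> measurable_fun setT g ->
  (forall x, 0 <= h x) ->
  \int[nu]_x h x + \int[nu]_x g x <= \int[nu]_x (h x + g x).
Proof.
move=> mh mg h0.
have [gfin|] := ltP (\int[nu]_x g^\- x) +oo.
  by rewrite L1eq.
rewrite leye_eq => /eqP ginf.
rewrite (integralE nu _ g) ginf /= !addeNy; exact: leNye.
Qed.

Lemma ae_mono (P Q : T -> Prop) : (forall x, P x -> Q x) ->
  {ae nu, forall x, P x} -> {ae nu, forall x, Q x}.
Proof. by move=> PQ aP; apply: filterS aP => x; exact: PQ. Qed.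
End INT.

Section TOP.
Variables (R : realType) (S : pmetricType R).
Implicit Types (f g : nat -> S -> \bar R).

Definition jinf f (n : nat) (delta : R) (s : S) : \bar R :=
  ereal_inf [set y | exists (m : nat) (s' : S),
     [/\ (n <= m)%N, ball s delta s' & y = f m s']].
Definition jsup g (n : nat) (delta : R) (s : S) : \bar R :=
  ereal_sup [set y | exists (m : nat) (s' : S),
     [/\ (n <= m)%N, ball s delta s' & y = g m s']].

Lemma jliminfE f s : joint_liminf f s =
  ereal_sup [set x | exists n delta, (0 < delta)%R /\ x = jinf f n delta s].
Proof. by []. Qed.
Lemma jlimsupE g s : joint_limsup g s =
  ereal_inf [set x | exists n delta, (0 < delta)%R /\ x = jsup g n delta s].
Proof. by []. Qed.

Lemma jinf_le f n delta s : (0 < delta)%R -> jinf f n delta s <= joint_liminf f s.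
Proof. by move=> d0; apply: ereal_sup_ubound; exists n, delta. Qed.
Lemma jsup_ge g n delta s : (0 < delta)%R -> joint_limsup g s <= jsup g n delta s.
Proof. by move=> d0; apply: ereal_inf_lbound; exists n, delta. Qed.

Lemma jinf_lb f n delta s m s' : (n <= m)%N -> ball s delta s' ->
  jinf f n delta s <= f m s'.
Proof. by move=> nm bs; apply: ereal_inf_lbound; exists m, s'. Qed.
Lemma jsup_ub g n delta s m s' : (n <= m)%N -> ball s delta s' ->
  g m s' <= jsup g n delta s.
Proof. by move=> nm bs; apply: ereal_sup_ubound; exists m, s'. Qed.

Lemma jinf_mono f n n' d d' s s' : (n <= n')%N ->
  (forall z, ball s' d' z -> ball s d z) -> jinf f n d s <= jinf f n' d' s'.
Proof.
move=> nn bb; apply: le_ereal_inf_tmp => _ [m [z [nm bz ->]]].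
by apply: jinf_lb; [exact: leq_trans nm|exact: bb].
Qed.
Lemma jsup_mono g n n' d d' s s' : (n <= n')%N ->
  (forall z, ball s' d' z -> ball s d z) -> jsup g n' d' s' <= jsup g n d s.
Proof.
move=> nn bb; apply: ge_ereal_sup => _ [m [z [nm bz ->]]].
by apply: jsup_ub; [exact: leq_trans nm|exact: bb].
Qed.

Lemma ball_half (s z : S) (d : R) : ball s (d / 2)%R z ->
  forall w, ball z (d / 2)%R w -> ball s d w.
Proof. by move=> sz w zw; rewrite [d]splitr; exact: ball_triangle sz zw. Qed.

Lemma jliminf_lsc f (a : R) : open [set x | a%:E < joint_liminf f x].
Proof.
rewrite openE => x /= /ereal_sup_gt [_ [n [d [d0 ->]]] ax].
apply/nbhs_ballP; exists (d / 2)%R => /=; first by rewrite divr_gt0.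
move=> z xz; apply: (lt_le_trans ax).
have d20 : (0 < d / 2)%R by rewrite divr_gt0.
apply: le_trans (jinf_le f n (d / 2)%R z d20).
by apply: jinf_mono => //; exact: ball_half.
Qed.

Lemma jlimsup_usc g (a : R) : open [set x | joint_limsup g x < a%:E].
Proof.
rewrite openE => x /= /ereal_inf_lt [_ [n [d [d0 ->]]] ax].
apply/nbhs_ballP; exists (d / 2)%R => /=; first by rewrite divr_gt0.
move=> z xz; apply: (le_lt_trans _ ax).
have d20 : (0 < d / 2)%R by rewrite divr_gt0.
apply: le_trans (jsup_ge g n (d / 2)%R z d20) _.
by apply: jsup_mono => //; exact: ball_half.
Qed.

Lemma open_mble (A : set S) : open A -> measurable (A : set (borel_of S)).
Proof. by move=> oA; apply: sub_sigma_algebra. Qed.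

Lemma lsc_mble (f : S -> \bar R) : (forall a : R, open [set x | a%:E < f x]) ->
  measurable_fun [set: borel_of S] (f : borel_of S -> \bar R).
Proof.
move=> H; apply: (measurability _ (ErealGenOInfty.measurableE R)).
move=> /= _ [_ [a ->]] <-; apply: measurableI => //.
rewrite preimage_itvoy; exact: open_mble.
Qed.

Lemma usc_mble (f : S -> \bar R) : (forall a : R, open [set x | f x < a%:E]) ->
  measurable_fun [set: borel_of S] (f : borel_of S -> \bar R).
Proof.
move=> H; apply: (measurability _ (ErealGenInftyO.measurableE R)).
move=> /= _ [_ [a ->]] <-; apply: measurableI => //.
rewrite preimage_itvNyo; exact: open_mble.
Qed.

Lemma jliminf_mble f : measurable_fun [set: borel_of S]
  (joint_liminf f : borel_of S -> \bar R).
Proof. apply: lsc_mble; exact: jliminf_lsc. Qed.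
Lemma jlimsup_mble g : measurable_fun [set: borel_of S]
  (joint_limsup g : borel_of S -> \bar R).
Proof. apply: usc_mble; exact: jlimsup_usc. Qed.

Lemma cont_mble (psi : S -> R) : continuous psi ->
  measurable_fun [set: borel_of S] ((fun x => (psi x)%:E) : borel_of S -> \bar R).
Proof.
move=> cpsi; apply: lsc_mble => a.
have -> : [set x | a%:E < (psi x)%:E] = psi @^-1` `]a, +oo[%classic.
  by apply/seteqP; split => x /=; rewrite in_itv /= andbT lte_fin.
apply: open_comp; last exact: rray_open.
by move=> x _; exact: cpsi.
Qed.
End TOP.
Arguments jinf {R S}.
Arguments jsup {R S}.

Section PSI.
Variables (R : realType) (S : pmetricType R) (h : nat -> S -> \bar R).
Hypothesis h0 : forall n x, (0 <= h n x)%E.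
Local Open Scope ring_scope.

Definition rN (N : nat) : R := (N.+1%:R)^-1.
Definition cN N (y : S) : R := fine (mine (jinf h N (rN N) y) (N%:R)%:E).
Definition kN N : R := 2 * N.+1%:R.
Definition wN N (x y : S) : R := Num.max 0 (1 - kN N * mdist x y).
Definition tset N x := [set cN N y * wN N x y | y in [set: S]].
Definition psi N x : R := sup (tset N x).

Lemma jinf_ge0 N d y : (0 <= jinf h N d y)%E.
Proof. by apply: le_ereal_inf_tmp => _ [m [z [_ _ ->]]]. Qed.

Lemma mine_bnd N y : (0 <= mine (jinf h N (rN N) y) (N%:R)%:E)%E /\
   (mine (jinf h N (rN N) y) (N%:R)%:E <= (N%:R)%:E)%E.
Proof.
split; first by rewrite le_min jinf_ge0 lee_fin ler0n.
by rewrite ge_min lexx orbT.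
Qed.

Lemma cNE N y : (cN N y)%:E = mine (jinf h N (rN N) y) (N%:R)%:E.
Proof.
have [m0 mN] := mine_bnd N y.
rewrite fineK // ge0_fin_numE //; apply: le_lt_trans mN _; exact: ltry.
Qed.

Lemma cN_ge0 N y : 0 <= cN N y.
Proof. by rewrite -lee_fin cNE; case: (mine_bnd N y). Qed.
Lemma cN_le N y : cN N y <= N%:R.
Proof. by rewrite -lee_fin cNE; case: (mine_bnd N y). Qed.

Lemma kN_gt0 N : 0 < kN N.
Proof. by rewrite /kN mulr_gt0 // ltr0n. Qed.

Lemma wN_ge0 N x y : 0 <= wN N x y.
Proof. by rewrite /wN le_max lexx. Qed.
Lemma wN_le1 N x y : wN N x y <= 1.
Proof.
rewrite /wN ge_max ler01 /= gerBl mulr_ge0 //; first exact: ltW (kN_gt0 N).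
exact: mdist_ge0.
Qed.

Lemma t_ge0 N x y : 0 <= cN N y * wN N x y.
Proof. by rewrite mulr_ge0 // ?cN_ge0 ?wN_ge0. Qed.
Lemma t_le N x y : cN N y * wN N x y <= N%:R.
Proof.
apply: le_trans (cN_le N y); rewrite ler_piMr ?cN_ge0 //; exact: wN_le1.
Qed.

Lemma tset_ne N x : tset N x !=set0.
Proof. by exists (cN N x * wN N x x), x. Qed.
Lemma tset_ub N x : has_ubound (tset N x).
Proof. by exists N%:R => _ [y _ <-]; exact: t_le. Qed.

Lemma psi_ge_t N x y : cN N y * wN N x y <= psi N x.
Proof.
by apply: sup_upper_bound; [split; [exact: tset_ne|exact: tset_ub]|exists y].
Qed.

Lemma psi_le N x : psi N x <= N%:R.
Proof. by apply: ge_sup; [exact: tset_ne|move=> _ [y _ <-]; exact: t_le]. Qed.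

Lemma psi_ge0 N x : 0 <= psi N x.
Proof. exact: le_trans (t_ge0 N x x) (psi_ge_t N x x). Qed.

Lemma psi_ge_c N x : cN N x <= psi N x.
Proof.
have := psi_ge_t N x x.
by rewrite /wN mdistxx mulr0 subr0 (max_r ler01) mulr1.
Qed.

Lemma w_lip N x x' y : wN N x y <= wN N x' y + kN N * mdist x x'.
Proof.
have tri := metric_triangle x' x y; rewrite (metric_sym x' x) in tri.
have k0 := kN_gt0 N; have d0 := mdist_ge0 x x'.
have : kN N * mdist x' y <= kN N * mdist x x' + kN N * mdist x y.
  by rewrite -mulrDr ler_wpM2l // ltW.
rewrite /wN /Order.max; set a := kN N * _; set b := kN N * _; set c := kN N * _.
have b0 : 0 <= b by rewrite mulr_ge0 // ltW.
move=> H; repeat case: ifPn; rewrite ?ltNge ?negbK; intros; lra.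
Qed.

Lemma psi_lip N x x' : psi N x <= psi N x' + N%:R * kN N * mdist x x'.
Proof.
apply: ge_sup; first exact: tset_ne.
move=> _ [y _ <-].
apply: le_trans (_ : cN N y * wN N x' y + N%:R * kN N * mdist x x' <= _); last first.
  by rewrite lerD2r psi_ge_t.
have := w_lip N x x' y; have := cN_ge0 N y; have := cN_le N y.
have := mulr_ge0 (ltW (kN_gt0 N)) (mdist_ge0 x x').
set c := cN N y; set w := wN N x y; set w' := wN N x' y; set t := kN N * _.
rewrite -mulrA -/t => t0 cle c0 wle.
have : c * w <= c * (w' + t) by rewrite ler_wpM2l.
have : c * t <= N%:R * t by rewrite ler_wpM2r.
rewrite mulrDr; lra.
Qed.

Lemma psi_cont N : continuous (psi N).
Proof.
move=> x; apply/cvgrPdist_lt => e e0.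
set M := N%:R * kN N.
have M0 : 0 <= M by rewrite mulr_ge0 // ltW // kN_gt0.
have L0 : 0 < M + 1 by rewrite ltr_wpDl.
apply/nbhs_ballP; exists (e / (M + 1)); first by rewrite /= divr_gt0.
move=> z; rewrite ballEmdist /= ltr_pdivlMr // => dz.
have d0 := mdist_ge0 x z.
have l1 := psi_lip N x z; have l2 := psi_lip N z x.
rewrite metric_sym -/M in l2; rewrite -/M in l1.
have : M * mdist x z <= (M + 1) * mdist x z by rewrite ler_wpM2r // lerDl.
rewrite ltr_norml; move=> H; apply/andP; split; nra.
Qed.

Lemma psi_le_h N m x : (N <= m)%N -> ((psi N x)%:E <= h m x)%E.
Proof.
move=> Nm; have := h0 m x; case E: (h m x) => [r| |] //= r0; last exact: leey.
rewrite lee_fin; apply: ge_sup; first exact: tset_ne.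
move=> _ [y _ <-].
have [w0|wpos] := eqVneq (wN N x y) 0.
  by rewrite w0 mulr0 -lee_fin.
have wp : 0 < wN N x y by rewrite lt_neqAle eq_sym wpos wN_ge0.
have : cN N y <= r.
  rewrite -lee_fin cNE -E.
  rewrite ge_min; apply/orP; left; apply: jinf_lb => //.
  rewrite ballEmdist /= metric_sym /rN.
  move: wp; rewrite /wN /Order.max; case: ifPn => //; last by rewrite ltxx.
  rewrite subr_gt0 /kN => H _.
  have d0 := mdist_ge0 x y.
  rewrite -[_^-1]div1r ltr_pdivlMr ?ltr0n //.
  have n0 : (0 : R) < N.+1%:R by rewrite ltr0n.
  nra.
move=> cr; apply: le_trans (_ : cN N y <= r) => //.
by rewrite ler_piMr ?cN_ge0 ?wN_le1.
Qed.

Lemma H_le_liminf_psi x :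
  (joint_liminf h x <= limn_einf (fun N => (psi N x)%:E))%E.
Proof.
apply: le_by_reals => a /ereal_sup_gt [_ [n0 [d [d0 ->]]] ad].
pose N0 := maxn n0 (maxn (Num.truncn d^-1) (Num.truncn `|a|).+1).
apply: (@liminf_lb_ev _ _ _ N0) => N; rewrite !geq_max => /and3P[n0N dN aN].
rewrite lee_fin; apply: le_trans (psi_ge_c N x).
rewrite -lee_fin cNE le_min; apply/andP; split.
  apply: (le_trans (ltW ad)); apply: jinf_mono => // z; apply: le_ball.
  rewrite /rN; rewrite truncn_le_nat in dN.
  apply/ltW; rewrite invf_plt ?posrE ?ltr0n ?invr_gt0 //.
rewrite lee_fin; apply: (le_trans (ler_norm a)).
rewrite ltW //; apply: lt_le_trans (_ : (Num.truncn `|a|).+1%:R <= _).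
  by apply: truncnS_gt.
by rewrite ler_nat.
Qed.

End PSI.
Arguments psi {R S}.
Arguments cN {R S}.
Arguments rN {R}.
Arguments kN {R}.
Arguments wN {R S}.
Arguments tset {R S}.

Section CORE.
Variables (R : realType) (S : pmetricType R).

Lemma jliminf_ge0 (h : nat -> S -> \bar R) : (forall n x, 0 <= h n x) ->
  forall x, 0 <= joint_liminf h x.
Proof.
move=> h0 x; apply: le_trans (jinf_le _ _ h 0 1%R x ltr01).
by apply: le_ereal_inf_tmp => _ [m [z [_ _ ->]]].
Qed.

Lemma coreB (mu_ : nat -> {measure set (borel_of S) -> \bar R})
  (mu : {measure set (borel_of S) -> \bar R}) (h : nat -> S -> \bar R) :
  weakly_converges mu_ mu ->
  (forall n, measurable_fun [set: borel_of S] (h n : borel_of S -> \bar R)) ->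
  (forall n x, 0 <= h n x) ->
  \int[mu]_x joint_liminf h x <= limn_einf (fun n => \int[mu_ n]_x h n x).
Proof.
move=> wc mh h0.
have mpsi (N : nat) : measurable_fun [set: borel_of S]
    ((fun x => (psi h N x)%:E) : borel_of S -> \bar R).
  by apply: cont_mble; exact: psi_cont.
have psi0 (N : nat) (x : borel_of S) : 0 <= (psi h N x)%:E.
  by rewrite lee_fin; exact: psi_ge0.
have step (N : nat) : \int[mu]_x (psi h N x)%:E <=
              limn_einf (fun n => \int[mu_ n]_x h n x).
  have bnd : exists M : R, forall x, (`|psi h N x| <= M)%R.
    exists N%:R => x; rewrite ger0_norm ?psi_ge0 //; exact: psi_le.
  have cv := wc (psi h N) (@psi_cont _ _ h h0 N) bnd.
  rewrite -(@liminf_cvg _ _ _ cv); apply: (@liminf_le_ev _ _ _ N) => n Nn.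
  apply: ge0_le_integral => // x _; exact: psi_le_h.
apply: (@le_trans _ _ (\int[mu]_x limn_einf (fun N => (psi h N x)%:E))).
  apply: ge0_le_integral => //.
  - by move=> x _; exact: jliminf_ge0.
  - exact: jliminf_mble.
  - rewrite /limn_einf; apply: measurableT_comp => //.
    by apply: measurable_fun_limn_esup => n; exact: measurableT_comp.
  - by move=> x _; exact: H_le_liminf_psi.
apply: le_trans (fatou _ _ mpsi _) _ => //.
exact: liminf_ub.
Qed.
End CORE.


Lemma pointwise_bound (R : realType) (S : pmetricType R) (f g : nat -> S -> \bar R) x :
  -oo < joint_limsup g x ->
  joint_liminf f x <=
  joint_liminf (fun n => (fun y => f n y - g n y)^\+) x + joint_limsup g x.
Proof.
set hh := (fun n => (fun y => f n y - g n y)^\+).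
have hh0 : forall n y, 0 <= hh n y by move=> n y; rewrite /hh funeposE le_max lexx orbT.
have H0 := @jliminf_ge0 _ _ hh hh0 x.
move=> Gx; apply: le_by_reals => a aF.
case EG: (joint_limsup g x) Gx => [s| |] // _; last first.
  by rewrite addey ?leey // gt_eqF // (lt_le_trans _ H0) // ltNy0.
rewrite -leeBlDr // -EFinB; apply/lee_addgt0Pr => e e0.
rewrite -leeBlDr // -EFinB -addrA -opprD.
move: aF => /ereal_sup_gt [_ [n1 [d1 [d10 ->]]] a1].
have : joint_limsup g x < (s + e)%:E by rewrite EG lte_fin ltrDl.
move=> /ereal_inf_lt [_ [n2 [d2 [d20 ->]]] t2].
pose n3 := maxn n1 n2; pose d3 := Num.min d1 d2.
have d30 : (0 < d3)%R by rewrite lt_min d10 d20.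
apply: le_trans (jinf_le _ _ hh n3 d3 x d30).
apply: le_ereal_inf_tmp => _ [m [z [n3m bz ->]]].
rewrite /hh funeposE le_max; apply/orP; left; rewrite EFinB; apply: leeB.
  apply: (le_trans (ltW a1)); apply: jinf_lb.
    exact: leq_trans (leq_maxl _ _) n3m.
  by apply: (le_ball (_ : d3 <= d1)%R) => //; rewrite ge_min lexx.
apply: le_trans (ltW t2); apply: jsup_ub.
  exact: leq_trans (leq_maxr _ _) n3m.
by apply: (le_ball (_ : d3 <= d2)%R) => //; rewrite ge_min lexx orbT.
Qed.

Lemma ptle (R : realType) (a b : \bar R) : b <= a -> maxe (a - b) 0 + b <= a.
Proof.
case: b => [s| |] ba.
- have : 0 <= a - s%:E by rewrite suber_ge0.
  by move=> h; rewrite (max_l h) subeK.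
- by move: ba; rewrite leye_eq => /eqP ->; exact: leey.
- by rewrite addeNy leNye.
Qed.

Theorem corollary2p7 (R : realType) (S : pmetricType R)
  (mu_ : nat -> {measure set (borel_of S) -> \bar R})
  (mu : {measure set (borel_of S) -> \bar R})
  (f g : nat -> S -> \bar R) :
  mu setT < +oo ->
  weak_conv_integrals_defined mu_ ->
  weakly_converges mu_ mu ->
  (forall n, measurable_fun [set: borel_of S] (f n : borel_of S -> \bar R)) ->
  (forall n, measurable_fun [set: borel_of S] (g n : borel_of S -> \bar R)) ->
  (forall n s, g n s <= f n s) ->
  integral_defined mu (joint_limsup g) ->
  (forall n, integral_defined (mu_ n) (g n)) ->
  -oo < \int[mu]_s joint_limsup g s ->
  \int[mu]_s joint_limsup g s <= limn_einf (fun n => \int[mu_ n]_s g n s) ->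
  \int[mu]_s joint_liminf f s <= limn_einf (fun n => \int[mu_ n]_s f n s).
Proof.
move=> muT _ wc mf mg gf _ _ GNy Gle.
pose hh := (fun n => (fun y => f n y - g n y)^\+).
have hh0 n y : 0 <= hh n y by rewrite /hh funeposE le_max lexx orbT.
have mhh n : measurable_fun [set: borel_of S] (hh n : borel_of S -> \bar R).
  by apply: measurable_funepos; exact: emeasurable_funB.
have mF := @jliminf_mble _ _ f; have mH := @jliminf_mble _ _ hh.
have mG := @jlimsup_mble _ _ g.
have H0 := @jliminf_ge0 _ _ hh hh0.
have Gn : \int[mu]_x (joint_limsup g)^\- x < +oo.
  rewrite ltNge leye_eq; apply/negP => /eqP Ginf.
  by move: GNy; rewrite integralE Ginf /= addeNy ltxx.
have aeG : {ae mu, forall x, -oo < joint_limsup g x}.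
  have iG : mu.-integrable setT (joint_limsup g)^\-.
    apply/integrableP; split; first exact: measurable_funeneg.
    under eq_integral do rewrite gee0_abs ?funenegE ?le_max ?lexx ?orbT//.
    by under eq_integral do rewrite -funenegE.
  apply: ae_mono (integrable_ae measurableT iG) => x /(_ I).
  rewrite funenegE ltNge leeNy_eq; case: (joint_limsup g x) => //=.
have step1 : \int[mu]_x joint_liminf f x <=
             \int[mu]_x (joint_liminf hh x + joint_limsup g x).
  apply: ae_le_int => //; first exact: emeasurable_funD.
  by apply: ae_mono aeG => x; exact: pointwise_bound.
apply: (le_trans step1); rewrite L1eq //.
apply: le_trans (leeD (@coreB _ _ _ _ _ wc mhh hh0) Gle) _.
apply: le_trans (liminfD _ _ _) _.
apply: (@liminf_le_ev _ _ _ 0) => n _ /=.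
apply: le_trans (@L1le _ _ _ _ _ _ (mhh n) (mg n) (hh0 n)) _.
apply: le_int => //; first exact: emeasurable_funD.
by move=> x; rewrite /hh funeposE; exact: ptle.
Qed.
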